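(* Let $q\in(0,1)$ and let $\{J_n\}_{n\ge1}$ be a sequence of random subsets of $\mathbb Z_{\ge0}$ (nonempty). Define $\eta_n=-\min(J_n)$ and $\phi_{n,x}=\prod_{j\in J_n}\frac{1}{1+q^{x+j}}$ for $n\ge1$, $x\in\mathbb R$. Then $\eta_n,\phi_{n,x}$ satisfy: (1) $0\le\phi_{n,x}\le\phi_{n,y}\le1$ for $x\le y$; (2) for every $\varepsilon>0$ there is $M$ with $\phi_{n,x}<\varepsilon$ whenever $\eta_n-x>M$, uniformly in $n,x$; (3) for every $\varepsilon>0$ there is $M$ with $\phi_{n,x}>1-\varepsilon$ whenever $\eta_n-x<-M$, uniformly in $n,x$; (4) there is $c>0$ independent of $n$ with $\phi_{n,x+1}-\phi_{n,x}\ge c$ whenever $x<\eta_n\le x+1$. Consequently the sequences $\{-\min(J_n)\}_{n\ge1}$ and $\{F_n(x)=\mathbb E\prod_{j\in J_n}(1+q^{x+j})^{-1}\}_{n\ge1}$ are asymptotically equivalent as $n\to\infty$.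
   Context: A sequence $\{\eta_n\}_{n\ge1}$ of real random variables spreads if $\lim_{n\to\infty}\sup_{x\in\mathbb R}\mathrm{Prob}\{x<\eta_n\le x+1\}=0$. A sequence $\{F_n\}_{n\ge1}$ of non-decreasing functions $\mathbb R\to\mathbb R$ spreads if $\lim_{n\to\infty}\sup_{x\in\mathbb R}(F_n(x+1)-F_n(x))=0$. A sequence of real random variables $\{\eta_n\}$ and a sequence of non-decreasing functions $\{F_n\}$ are asymptotically equivalent if (i) $\{\eta_n\}$ spreads if and only if $\{F_n\}$ spreads, and (ii) when both spread, $\lim_{n\to\infty}\sup_{x\in\mathbb R}(\mathrm{Prob}\{\eta_n\le x\}-F_n(x))=0$. *)

(* Defs.v *)
From HB Require Import structures.
From mathcomp Require Import all_boot all_order all_algebra.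
From mathcomp Require Import all_classical all_reals all_analysis.
Set Implicit Arguments. Unset Strict Implicit. Unset Printing Implicit Defensive.
Import Order.TTheory GRing.Theory Num.Theory.
Import numFieldNormedType.Exports.
Local Open Scope classical_set_scope.
Local Open Scope ring_scope.

(* min(J): the least element of J (meaningful when J is nonempty). *)
Definition minJ (J : pred nat) : nat :=
  xget 0%N [set m : nat | J m /\ forall k, J k -> (m <= k)%N].

Definition phi {R : realType} (q : R) (J : pred nat) (x : R) : R :=
  limn (fun N : nat => \prod_(j < N | J j) (1 + q `^ (x + j%:R))^-1).

Definition spreads_rv {d} {T : measurableType d} {R : realType}
  (P : probability T R) (eta : nat -> T -> R) : Prop :=
  (fun n => ereal_sup [set P [set w | x < eta n w <= x + 1] | x in [set: R]])
    @ \oo --> 0%E.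

Definition spreads_fun {R : realType} (F : nat -> R -> R) : Prop :=
  (fun n => ereal_sup [set ((F n (x + 1) - F n x)%:E) | x in [set: R]])
    @ \oo --> 0%E.

Definition asymp_equiv {d} {T : measurableType d} {R : realType}
  (P : probability T R) (eta : nat -> T -> R) (F : nat -> R -> R) : Prop :=
  (spreads_rv P eta <-> spreads_fun F) /\
  (spreads_rv P eta -> spreads_fun F ->
    (fun n => ereal_sup [set (P [set w | (eta n w <= x)%R] - (F n x)%:E)%E
                        | x in [set: R]]) @ \oo --> 0%E).

(* Main.v *)
Require Import Defs.
From HB Require Import structures.
From mathcomp Require Import all_boot all_order all_algebra.
From mathcomp Require Import all_classical all_reals all_analysis.
From mathcomp Require Import ring lra zify.
From mathcomp Require Import measurable_realfun.
Import Order.TTheory GRing.Theory Num.Theory.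
Import numFieldNormedType.Exports.
Local Open Scope classical_set_scope.
Local Open Scope ring_scope.
Definition fac {R : realType} (q x : R) (j : nat) : R := (1 + q `^ (x + j%:R))^-1.
Definition pp {R : realType} (q : R) (J : pred nat) (x : R) (N : nat) : R :=
  \prod_(j < N | J j) fac q x j.

Lemma fac_gt0 (R : realType) (q x : R) j : 0 < fac q x j.
Proof. by rewrite /fac invr_gt0 ltr_wpDr ?powR_ge0. Qed.

Lemma fac_le1 (R : realType) (q x : R) j : fac q x j <= 1.
Proof. by rewrite /fac invf_le1 ?lerDl ?powR_ge0 // ltr_wpDr ?powR_ge0. Qed.

Lemma fac_mono (R : realType) (q x y : R) j : 0 < q < 1 -> x <= y -> fac q x j <= fac q y j.
Proof.
move=> /andP[q0 q1] xy; rewrite /fac lef_pV2 ?posrE ?ltr_wpDr ?powR_ge0 //.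
rewrite lerD2l; apply: ger_powR; first by rewrite q0 ltW.
by rewrite lerD2r.
Qed.

Lemma pp_ge0 (R : realType) (q : R) J x N : 0 <= pp q J x N.
Proof. by apply: prodr_ge0 => j _; exact/ltW/fac_gt0. Qed.

Lemma pp_le1 (R : realType) (q : R) J x N : pp q J x N <= 1.
Proof. by apply: prodr_ile1 => j _; rewrite fac_le1 ltW ?fac_gt0. Qed.

Lemma ppS (R : realType) (q : R) J x N :
  pp q J x N.+1 = pp q J x N * (if J N then fac q x N else 1).
Proof. by rewrite /pp big_mkcond big_ord_recr /= -big_mkcond. Qed.

Lemma pp_nonincr (R : realType) (q : R) J x :
  {homo pp q J x : n m / (n <= m)%N >-> m <= n}.
Proof.
apply/nonincreasing_seqP => N; rewrite ppS; case: (J N); last by rewrite mulr1.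
by rewrite ler_piMr ?pp_ge0 ?fac_le1.
Qed.

Lemma pp_cvg (R : realType) (q : R) J x : cvgn (pp q J x).
Proof.
apply: nonincreasing_is_cvgn; first exact: pp_nonincr.
by exists 0 => _ [N _ <-]; exact: pp_ge0.
Qed.

Lemma phiE (R : realType) (q : R) J x : phi q J x = limn (pp q J x).
Proof. by []. Qed.

Lemma phi_le_pp (R : realType) (q : R) J x N : phi q J x <= pp q J x N.
Proof. by rewrite phiE; apply: nonincreasing_cvgn_ge; [exact: pp_nonincr|exact: pp_cvg]. Qed.

Lemma phi_ge (R : realType) (q : R) J x a : (forall N, a <= pp q J x N) -> a <= phi q J x.
Proof. by move=> h; rewrite phiE; apply: limr_ge; [exact: pp_cvg|exact: nearW]. Qed.

Lemma phi_ge0 (R : realType) (q : R) J x : 0 <= phi q J x.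
Proof. by apply: phi_ge => N; exact: pp_ge0. Qed.

Lemma phi_le1 (R : realType) (q : R) J x : phi q J x <= 1.
Proof. by apply: le_trans (phi_le_pp _ q J x 0) _; rewrite /pp big_ord0. Qed.

Lemma pp_mono (R : realType) (q x y : R) J N : 0 < q < 1 -> x <= y -> pp q J x N <= pp q J y N.
Proof. by move=> hq xy; apply: ler_prod => j _; rewrite ltW ?fac_gt0 ?fac_mono. Qed.

Lemma phi_mono (R : realType) (q x y : R) J : 0 < q < 1 -> x <= y -> phi q J x <= phi q J y.
Proof.
move=> hq xy; rewrite !phiE; apply: ler_lim; [exact: pp_cvg|exact: pp_cvg|].
by apply: nearW => N; exact: pp_mono.
Qed.

Lemma powS (R : realType) (q x : R) (N : nat) : 0 < q ->
  q `^ (x + N.+1%:R) = q * q `^ (x + N%:R).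
Proof.
move=> q0; rewrite -natr1 addrA [LHS]powRD; last by apply/implyP => _; rewrite gt_eqF.
by rewrite powRr1 ?ltW // mulrC.
Qed.

Lemma geo_bound (R : realType) (q x : R) (m0 N : nat) : 0 < q < 1 ->
  (1 - q) * \sum_(j < N | (m0 <= j)%N) q `^ (x + j%:R)
    <= q `^ (x + m0%:R) - q `^ (x + (maxn N m0)%:R).
Proof.
move=> /andP[q0 q1]; elim: N => [|N IH].
  by rewrite big_ord0 mulr0 max0n subrr.
rewrite big_mkcond big_ord_recr /= -big_mkcond.
case: (leqP m0 N) => hm.
  have -> : maxn N.+1 m0 = N.+1 by apply/maxn_idPl; lia.
  have e : maxn N m0 = N by apply/maxn_idPl.
  rewrite e in IH; rewrite powS //; move: IH.
  set s := \sum_(_ < _ | _) _.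
  set t := q `^ (x + N%:R); nra.
have -> : maxn N.+1 m0 = maxn N m0 by rewrite !maxnE; lia.
by rewrite addr0.
Qed.

Lemma sum_bound (R : realType) (q x : R) (m0 N : nat) (P : pred nat) : 0 < q < 1 ->
  (forall j, P j -> (m0 <= j)%N) ->
  \sum_(j < N | P j) q `^ (x + j%:R) <= q `^ (x + m0%:R) / (1 - q).
Proof.
move=> hq hP; have /andP[q0 q1] := hq.
apply: (@le_trans _ _ (\sum_(j < N | (m0 <= j)%N) q `^ (x + j%:R))).
  rewrite big_mkcond [X in _ <= X]big_mkcond /=; apply: ler_sum => j _.
  case Pj: (P j); first by rewrite hP.
  by case: ifP => // _; exact: powR_ge0.
rewrite ler_pdivlMr ?subr_gt0 // mulrC.
apply: le_trans (geo_bound _ _ _ _ _ hq) _.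
by rewrite gerBl powR_ge0.
Qed.

Lemma prod_lb (R : realType) (q x : R) (m0 N : nat) (P : pred nat) : 0 < q < 1 ->
  (forall j, P j -> (m0 <= j)%N) ->
  expR (- (q `^ (x + m0%:R) / (1 - q))) <= \prod_(j < N | P j) fac q x j.
Proof.
move=> hq hP.
apply: (@le_trans _ _ (\prod_(j < N | P j) expR (- q `^ (x + j%:R)))).
  rewrite -expR_sum ler_expR sumrN lerN2; exact: sum_bound.
apply: ler_prod => j _; rewrite expR_ge0 /= expRN /fac.
rewrite lef_pV2 ?posrE ?expR_gt0 ?ltr_wpDr ?powR_ge0 //.
exact: expR_ge1Dx.
Qed.

Lemma pp_split (R : realType) (q x : R) (J : pred nat) m N : J m ->
  (forall k, J k -> (m <= k)%N) -> (m < N)%N ->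
  pp q J x N = fac q x m * \prod_(j < N | J j && (m < j)%N) fac q x j.
Proof.
move=> Jm hm mN; rewrite /pp (bigD1 (Ordinal mN)) //=; congr (_ * _).
apply: eq_bigl => j; case Jj: (J j) => //=.
have := hm _ Jj; rewrite -val_eqE /= ltn_neqAle => ->; by rewrite andbT eq_sym.
Qed.

Lemma pow_small (R : realType) (q d : R) : 0 < q < 1 -> 0 < d ->
  exists M : R, forall t, M < t -> q `^ t < d.
Proof.
move=> /andP[q0 q1] d0; exists (ln d / ln q) => t Mt.
rewrite /powR gt_eqF // -[X in _ < X](@lnK _ d) ?posrE // ltr_expR.
have lq : ln q < 0 by rewrite ln_lt0 // q0 q1.
rewrite -(ltr_nM2r lq) in Mt; by rewrite mulfVK ?lt_eqF in Mt.
Qed.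

Lemma pow_big (R : realType) (q K : R) : 0 < q < 1 -> 0 < K ->
  exists M : R, forall t, t < - M -> K < q `^ t.
Proof.
move=> hq K0; have [M hM] := @pow_small R q K^-1 hq (ltac:(by rewrite invr_gt0)).
exists M => t tM; have := hM (- t); rewrite ltrNr => /(_ tM).
rewrite powRN => h; rewrite -[K]invrK -[q `^ t]invrK ltf_pV2 ?posrE ?invr_gt0 //.
by have /andP[q0 _] := hq; rewrite powR_gt0.
Qed.

Lemma minJ_spec (J : pred nat) : (exists j, J j) ->
  J (minJ J) /\ forall k, J k -> (minJ J <= k)%N.
Proof.
move=> exJ; rewrite /minJ; apply: (@xgetPex _ 0%N [set m | J m /\ forall k, J k -> (m <= k)%N]).
case: (ex_minnP exJ) => m Jm hm; by exists m; split.
Qed.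

Lemma prod_fac_le1 (R : realType) (q x : R) N (P : pred nat) :
  \prod_(j < N | P j) fac q x j <= 1.
Proof. by apply: prodr_ile1 => j _; rewrite fac_le1 ltW ?fac_gt0. Qed.

Lemma gap_alg (R : realType) (q u : R) : 0 < q < 1 -> 1 <= u -> q * u <= 1 ->
  q * (1 - q) / (2 * (1 + q)) <= (1 + u * q)^-1 - (1 + u)^-1.
Proof.
move=> /andP[q0 q1] u1 qu.
have A0 : 0 < 1 + u * q by nra.
have B0 : 0 < 1 + u by lra.
have -> : (1 + u * q)^-1 - (1 + u)^-1 = (u * (1 - q)) / ((1 + u * q) * (1 + u)).
  by field; apply/andP; split; rewrite gt_eqF.
rewrite ler_pdivlMr ?mulr_gt0 // mulrAC ler_pdivrMr; last by lra.
have h1 : q * (1 + u) <= 1 + q by lra.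
have h2 : 1 + u * q <= 2 by lra.
have h3 : q * ((1 + u * q) * (1 + u)) <= 2 * u * (1 + q) by nra.
nra.
Qed.

Lemma phi_small (R : realType) (q : R) : 0 < q < 1 -> forall eps : R, 0 < eps ->
  exists M : R, forall (J : pred nat) x, (exists j, J j) ->
    - (minJ J)%:R - x > M -> phi q J x < eps.
Proof.
move=> hq eps e0; have [M hM] := @pow_big R q eps^-1 hq (ltac:(by rewrite invr_gt0)).
exists M => J x exJ hx; have [Jm hm] := minJ_spec _ exJ; set m := minJ J in Jm hm hx.
apply: (le_lt_trans (phi_le_pp _ q J x m.+1)).
rewrite (@pp_split _ q x J m _ Jm hm (ltnSn m)).
apply: (@le_lt_trans _ _ (fac q x m)).
  apply: ler_piMr; first exact: ltW (fac_gt0 _ _ _ _).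
  have h := prod_fac_le1 _ q x m.+1 (fun j => J j && (m < j)%N); exact h.
have t0 : 0 < 1 + q `^ (x + m%:R) by rewrite ltr_wpDr ?powR_ge0.
rewrite /fac invf_plt ?posrE //.
apply: lt_le_trans (hM (x + m%:R) _) _; first by lra.
lra.
Qed.

Lemma phi_big (R : realType) (q : R) : 0 < q < 1 -> forall eps : R, 0 < eps ->
  exists M : R, forall (J : pred nat) x, (exists j, J j) ->
    - (minJ J)%:R - x < - M -> phi q J x > 1 - eps.
Proof.
move=> hq eps e0; have /andP[q0 q1] := hq.
have [M hM] := @pow_small R q (eps * (1 - q)) hq (ltac:(by rewrite mulr_gt0 // subr_gt0)).
exists M => J x exJ hx; have [Jm hm] := minJ_spec _ exJ; set m := minJ J in Jm hm hx.
have hs := hM (x + m%:R) ltac:(lra).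
have hs' : q `^ (x + m%:R) / (1 - q) < eps by rewrite ltr_pdivrMr ?subr_gt0.
apply: (@lt_le_trans _ _ (expR (- (q `^ (x + m%:R) / (1 - q))))).
  have := expR_ge1Dx (- (q `^ (x + m%:R) / (1 - q))); lra.
by apply: phi_ge => N; apply: prod_lb.
Qed.

Lemma phi_gap (R : realType) (q : R) : 0 < q < 1 -> exists c : R, 0 < c /\
  forall (J : pred nat) x, (exists j, J j) ->
    x < - (minJ J)%:R <= x + 1 -> phi q J (x + 1) - phi q J x >= c.
Proof.
move=> hq; have /andP[q0 q1] := hq.
set g := q * (1 - q) / (2 * (1 + q)); set E := expR (- (1 - q)^-1).
have g0 : 0 < g by rewrite /g divr_gt0 ?mulr_gt0 ?subr_gt0 //; lra.
have E0 : 0 < E by apply: expR_gt0.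
exists (g * E); split; first exact: mulr_gt0.
move=> J x exJ /andP[hx1 hx2]; have [Jm hm] := minJ_spec _ exJ.
set m := minJ J in Jm hm hx1 hx2.
set a := x + m%:R.
have a0 : a <= 0 by rewrite /a; lra.
have a1 : -1 <= a by rewrite /a; lra.
set u := q `^ a.
have u1 : 1 <= u by rewrite /u -(powRr0 q); apply: ger_powR => //; rewrite q0 ltW.
have qu : q * u <= 1.
  have : u <= q^-1 by rewrite /u -(powR_inv1 (ltW q0)); apply: ger_powR => //; rewrite q0 ltW.
  by rewrite -(ler_pM2l q0) mulfV ?gt_eqF.
have hf0 : fac q x m = (1 + u)^-1 by [].
have hf1 : fac q (x + 1) m = (1 + u * q)^-1.
  rewrite /fac (_ : x + 1 + m%:R = a + 1); last by rewrite /a; lra.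
  rewrite powRD; last by apply/implyP => _; rewrite gt_eqF.
  by rewrite powRr1 ?ltW.
have hg := @gap_alg _ q u hq u1 qu.
suff H : forall N, (m < N)%N -> g * E + phi q J x <= pp q J (x + 1) N.
  rewrite lerBrDr phiE; apply: limr_ge; first exact: pp_cvg.
  by exists m.+1 => // N /= hN; apply: H.
move=> N mN.
apply: (@le_trans _ _ (g * E + pp q J x N)); first by rewrite lerD2l phi_le_pp.
rewrite (@pp_split _ q x J m _ Jm hm mN) (@pp_split _ q (x + 1) J m _ Jm hm mN).
set r0 := \prod_(_ < _ | _) fac q x _.
set r1 := \prod_(_ < _ | _) fac q (x + 1) _.
have r01 : r0 <= r1 by apply: ler_prod => j _; rewrite ltW ?fac_gt0 ?fac_mono //; lra.
have r0E : E <= r0.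
  apply: le_trans (@prod_lb _ q x m.+1 N (fun j => J j && (m < j)%N) hq _); last by move=> j /andP[].
  rewrite /E ler_expR lerN2 ler_pdivrMr ?subr_gt0 // mulVf ?gt_eqF ?subr_gt0 //.
  rewrite -[X in _ <= X](powRr0 q); apply: ger_powR; first by rewrite q0 ltW.
  by rewrite -natr1; rewrite /a in a1; lra.
have f0 := fac_gt0 _ q x m; have f1 := fac_gt0 _ q (x + 1) m.
rewrite hf0 hf1 in f0 f1 *; have hg' : g <= (1 + u * q)^-1 - (1 + u)^-1 by exact: hg.
have h1 : (1 + u * q)^-1 * r0 <= (1 + u * q)^-1 * r1 by apply: ler_wpM2l => //; exact: ltW.
have h2 : g * E <= ((1 + u * q)^-1 - (1 + u)^-1) * r0 by apply: ler_pM => //; exact: ltW.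
lra.
Qed.

Lemma mEFin d (T : measurableType d) (R : realType) (g : T -> R) :
  measurable_fun setT g -> measurable_fun setT (fun w => (g w)%:E).
Proof. by move=> mg; apply/measurable_realfun.measurable_EFinP. Qed.

Lemma int01 d (T : measurableType d) (R : realType) (P : probability T R) (f : T -> R) :
  measurable_fun setT f -> (forall w, 0 <= f w <= 1) ->
  (\int[P]_w (f w)%:E)%E = (fine (\int[P]_w (f w)%:E))%:E /\
  0 <= fine (\int[P]_w (f w)%:E) <= 1.
Proof.
move=> mf f01.
have h0 : (0 <= \int[P]_w (f w)%:E)%E.
  by apply: integral_ge0 => w _; rewrite lee_fin; have /andP[] := f01 w.
have h1 : (\int[P]_w (f w)%:E <= 1)%E.
  apply: (@le_trans _ _ (\int[P]_w (cst 1%E w))%E).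
    apply: ge0_le_integral => //.
    - by move=> w _; rewrite lee_fin; have /andP[] := f01 w.
    - exact: mEFin.
    - by move=> w _; rewrite lee_fin; have /andP[] := f01 w.
  rewrite integral_cst //. apply: (@le_trans _ _ (P setT)); first by rewrite mul1e. exact: probability_le1.
have fin : (\int[P]_w (f w)%:E)%E \is a fin_num.
  by rewrite ge0_fin_numE // (le_lt_trans h1) // ltey.
split; first by rewrite fineK.
by rewrite fine_ge0 //= -lee_fin fineK.
Qed.

Lemma int_lin d (T : measurableType d) (R : realType) (P : probability T R)
  (g : T -> R) (A : set T) (a b : R) :
  measurable_fun setT g -> (forall w, 0 <= g w) -> measurable A -> 0 <= a -> 0 <= b ->
  (\int[P]_w ((g w + a * \1_A w + b)%:E))%E = (\int[P]_w (g w)%:E + a%:E * P A + b%:E)%E.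
Proof.
move=> mg g0 mA a0 b0.
have mi : measurable_fun setT (\1_A : T -> R) by exact: measurable_indic.
have i0 : forall w, 0 <= a * \1_A w by move=> w; rewrite mulr_ge0 // indicE ler0n.
under eq_integral do rewrite EFinD.
rewrite ge0_integralD //; try (by move=> w _; rewrite lee_fin ?addr_ge0);
  try (by apply: mEFin; apply: measurable_funD => //; exact: measurable_funM).
under eq_integral do rewrite EFinD.
rewrite ge0_integralD //; try (by move=> w _; rewrite lee_fin ?addr_ge0);
  try (by apply: mEFin; exact: measurable_funM); try exact: mEFin.
have -> : (\int[P]_x (a * \1_A x)%:E)%E = (a%:E * P A)%E.
  under eq_integral do rewrite EFinM.
  rewrite ge0_integralZl_EFin //; try (by move=> w _; rewrite lee_fin indicE ler0n);
    try exact: mEFin.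
  by rewrite integral_indic // setIT.
rewrite integral_cst //.
congr (_ + _)%E; rewrite -[RHS]mule1; congr (_ * _)%E; exact: probability_setT.
Qed.

Lemma sup_ub (R : realType) (f : R -> \bar R) x0 :
  (f x0 <= ereal_sup [set f x | x in [set: R]])%E.
Proof. by apply: ereal_sup_ubound; exists x0. Qed.

Lemma window_sum d (T : measurableType d) (R : realType) (P : probability T R) (e : T -> R) :
  (forall Q : set R, measurable [set w | Q (e w)]) ->
  forall (k : nat) (a : R), (P [set w | (a < e w <= a + k%:R)%R] <=
     k%:R%:E * ereal_sup [set P [set w | (x < e w <= x + 1)%R] | x in [set: R]])%E.
Proof.
move=> hm; set S := ereal_sup _.
have S0 : (0 <= S)%E by apply: le_trans (sup_ub _ _ 0); exact: measure_ge0.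
elim=> [|k IH] a.
  rewrite addr0 (_ : [set w | (a < e w <= a)%R] = set0); last first.
    by apply/seteqP; split => w //= /andP[h1 h2]; move: h1; rewrite ltNge h2.
  by rewrite measure0 mule_ge0 // lee_fin.
apply: (@le_trans _ _ (P ([set w | (a < e w <= a + k%:R)%R] `|`
                         [set w | (a + k%:R < e w <= a + k%:R + 1)%R]))).
  apply: le_measure; rewrite ?inE.
  - exact: (hm (fun r => a < r <= a + k.+1%:R)).
  - by apply: measurableU; [exact: (hm (fun r => a < r <= a + k%:R))|
                           exact: (hm (fun r => a + k%:R < r <= a + k%:R + 1))].
  move=> w /= /andP[h1 h2].
  have [h3|h3] := lerP (e w) (a + k%:R); [left|right]; apply/andP; split => //.
  by rewrite -natr1 addrA in h2.
apply: le_trans (measureU2 _ _ _) _.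
- exact: (hm (fun r => a < r <= a + k%:R)).
- exact: (hm (fun r => a + k%:R < r <= a + k%:R + 1)).
rewrite -natr1 EFinD ge0_muleDl ?lee_fin // mul1e.
by apply: leeD; [exact: IH| exact: sup_ub _ _ (a + k%:R)].
Qed.

Lemma cvg0_bound (R : realType) (u v : nat -> \bar R) :
  (forall n, 0 <= u n)%E -> (forall n, 0 <= v n)%E -> v @ \oo --> 0%E ->
  (forall e : R, 0 < e -> exists C : R, 0 < C /\ forall n, (u n <= C%:E * v n + e%:E)%E) ->
  u @ \oo --> 0%E.
Proof.
move=> u0 v0 /fine_cvgP [vfin vcvg] H.
have ufin : \forall n \near \oo, u n \is a fin_num.
  have [C [C0 hC]] := H 1 ltr01.
  near=> n; rewrite ge0_fin_numE // (le_lt_trans (hC n)) //.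
  have vf : v n \is a fin_num by near: n.
  by rewrite -(fineK vf) -EFinM -EFinD ltry.
apply/fine_cvgP; split => //.
apply/cvgrPdist_le => e e0.
have [C [C0 hC]] := H (e / 2) ltac:(by rewrite divr_gt0).
move/cvgrPdist_le : vcvg => /(_ (e / (2 * C)) ltac:(by rewrite divr_gt0 ?mulr_gt0)) hv.
near=> n.
have uf : u n \is a fin_num by near: n.
have vf : v n \is a fin_num by near: n.
have hvn : `|0 - fine (v n)| <= e / (2 * C) by near: n.
have := hC n; rewrite -(fineK uf) -(fineK vf) -EFinM -EFinD lee_fin => hu.
rewrite sub0r normrN ger0_norm ?fine_ge0 //.
rewrite sub0r normrN ger0_norm ?fine_ge0 // in hvn.
have h1 : C * fine (v n) <= C * (e / (2 * C)) by rewrite ler_pM2l.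
have h2 : C * (e / (2 * C)) = e / 2 by field; rewrite gt_eqF.
rewrite /=; lra.
Unshelve. all: by end_near.
Qed.

Lemma Pfin d (T : measurableType d) (R : realType) (P : probability T R) (A : set T) :
  measurable A -> P A = (fine (P A))%:E /\ 0 <= fine (P A) <= 1.
Proof.
move=> mA; have h0 := measure_ge0 P A; have h1 := probability_le1 P mA.
have f : P A \is a fin_num by rewrite ge0_fin_numE // (le_lt_trans h1) // ltey.
split; first by rewrite fineK.
by rewrite fine_ge0 //= -lee_fin fineK.
Qed.

Lemma main_abs d (T : measurableType d) (R : realType) (P : probability T R)
  (eta : nat -> T -> R) (ph : nat -> T -> R -> R) :
  (forall n (Q : set R), measurable [set w | Q (eta n w)]) ->
  (forall n x, measurable_fun setT (fun w => ph n w x)) ->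
  (forall n w, eta n w <= 0) ->
  (forall n w (x y : R), x <= y -> 0 <= ph n w x /\ ph n w x <= ph n w y /\ ph n w y <= 1) ->
  (forall eps : R, 0 < eps -> exists M : R, forall n w x,
      eta n w - x > M -> ph n w x < eps) ->
  (forall eps : R, 0 < eps -> exists M : R, forall n w x,
      eta n w - x < - M -> ph n w x > 1 - eps) ->
  (exists c : R, 0 < c /\ forall n w x,
      x < eta n w <= x + 1 -> ph n w (x + 1) - ph n w x >= c) ->
  asymp_equiv P eta (fun n x => fine (\int[P]_w (ph n w x)%:E)).
Proof.
move=> hme hmp eta0 h1 h2 h3 [c [c0 h4]].
set F := fun n x => _.
have ph01 : forall n w x, 0 <= ph n w x <= 1.
  by move=> n w x; have [? [? ?]] := h1 n w x x (lexx x); apply/andP; split.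
have phmono : forall n w x y, x <= y -> ph n w x <= ph n w y.
  by move=> n w x y xy; have [? [? ?]] := h1 n w x y xy.
have FE : forall n x, (\int[P]_w (ph n w x)%:E)%E = (F n x)%:E /\ 0 <= F n x <= 1.
  by move=> n x; exact: int01.
set S := fun n => ereal_sup [set P [set w | x < eta n w <= x + 1] | x in [set: R]].
have S0 : forall n, (0 <= S n)%E.
  by move=> n; apply: le_trans (sup_ub _ _ 0); exact: measure_ge0.
have mset : forall n (Q : R -> bool), measurable [set w | Q (eta n w)].
  by move=> n Q; exact: (hme n (fun r => Q r)).
have ph0 : forall n w x, 0 <= ph n w x by move=> n w x; have /andP[] := ph01 n w x.
have ph1 : forall n w x, ph n w x <= 1 by move=> n w x; have /andP[] := ph01 n w x.
have i01 : forall (A : set T) w, 0 <= (\1_A w : R) <= 1.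
  by move=> A w; rewrite indicE; case: (w \in A) => /=; lra.
have Fmono : forall n x y, x <= y -> F n x <= F n y.
  move=> n x y xy; rewrite -lee_fin -(FE n x).1 -(FE n y).1.
  apply: ge0_le_integral => //; try (by move=> w _; rewrite lee_fin);
    try exact: mEFin.
  by move=> w _; rewrite lee_fin phmono.
have KA : forall n x, (c%:E * P [set w | (x < eta n w <= x + 1)%R] <=
                       (F n (x + 1) - F n x)%:E)%E.
  move=> n x; set W := [set w | _].
  have mW : measurable W by exact: (mset n (fun r => x < r <= x + 1)).
  have le : (\int[P]_w ((ph n w x + c * \1_W w + 0)%:E) <=
             \int[P]_w (ph n w (x + 1))%:E)%E.
    apply: ge0_le_integral => //.
    - move=> w _; rewrite lee_fin addr0; have /andP[i0 _] := i01 W w; have := ph0 n w x; nra.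
    - apply: mEFin; apply: measurable_funD; last exact: measurable_cst.
      apply: measurable_funD => //; apply: measurable_funM; first exact: measurable_cst.
      exact: measurable_indic.
    - exact: mEFin.
    move=> w _; rewrite lee_fin; have [Ww|nWw] := pselect (W w).
      rewrite indicE mem_set //= mulr1 addr0; have := h4 n w x Ww; lra.
    rewrite indicE memNset //= mulr0 !addr0; apply: phmono; lra.
  rewrite int_lin // in le; last exact: ltW.
  rewrite (FE n x).1 (FE n (x + 1)).1 (Pfin _ _ _ P _ mW).1 in le *.
  by rewrite -!EFinM -!EFinD !lee_fin in le *; lra.
have KB : forall eps, 0 < eps -> exists k : nat, (0 < k)%N /\ forall n x,
   ((F n (x + 1) - F n x)%:E <= k%:R%:E * S n + eps%:E)%E.
  move=> eps e0; have [M2 hM2] := h2 eps e0; have [M3 hM3] := h3 eps e0.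
  set K := Num.Def.archi_bound (Num.max 0 (Num.max M2 M3)).
  have hK : Num.max 0 (Num.max M2 M3) < K%:R by apply: archi_boundP; rewrite le_max lexx.
  have hK2 : M2 < K%:R by apply: le_lt_trans hK; rewrite !le_max lexx !orbT.
  have hK3 : M3 < K%:R by apply: le_lt_trans hK; rewrite !le_max lexx !orbT.
  exists (2 * K).+1; split => // n x.
  set A := [set w | (x - K%:R < eta n w <= x - K%:R + ((2 * K).+1)%:R)%R].
  have mA : measurable A.
    exact: (mset n (fun r => x - K%:R < r <= x - K%:R + ((2 * K).+1)%:R)).
  have e2K : ((2 * K).+1)%:R = 2 * K%:R + 1 :> R by rewrite -natr1 natrM.
  have le : (\int[P]_w (ph n w (x + 1))%:E <=
             \int[P]_w ((ph n w x + 1 * \1_A w + eps)%:E))%E.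
    apply: ge0_le_integral => //.
    - by move=> w _; rewrite lee_fin.
    - exact: mEFin.
    - apply: mEFin; apply: measurable_funD; last exact: measurable_cst.
      apply: measurable_funD => //; apply: measurable_funM; first exact: measurable_cst.
      exact: measurable_indic.
    move=> w _; rewrite lee_fin; have [Aw|nAw] := pselect (A w).
      rewrite indicE mem_set //= mulr1; have := ph1 n w (x + 1); have := ph0 n w x; lra.
    rewrite indicE memNset //= mulr0 addr0.
    have [he|he] := lerP (eta n w) (x - K%:R).
      have := hM3 n w x ltac:(lra); have := ph1 n w (x + 1); lra.
    have he2 : x - K%:R + ((2 * K).+1)%:R < eta n w.
      rewrite ltNge; apply/negP => he2; apply: nAw; rewrite /A /=.
      by rewrite he he2.
    have := hM2 n w (x + 1) ltac:(lra); have := ph0 n w x; lra.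
  rewrite (int_lin _ _ _ P _ _ _ _ (hmp n x) (fun w => ph0 n w x) mA ler01 (ltW e0)) in le.
  rewrite (FE n x).1 (FE n (x + 1)).1 (Pfin _ _ _ P _ mA).1 in le.
  have hw := window_sum _ _ _ P (eta n) (hme n) ((2 * K).+1) (x - K%:R).
  rewrite (Pfin _ _ _ P _ mA).1 in hw.
  rewrite -EFinM -!EFinD lee_fin in le.
  apply: (@le_trans _ _ ((fine (P A))%:E + eps%:E)%E).
    rewrite -EFinD lee_fin; lra.
  by apply: leeD.
have KC : forall eps, 0 < eps -> exists k : nat, (0 < k)%N /\ forall n x,
   (P [set w | (eta n w <= x)%R] - (F n x)%:E <= k%:R%:E * S n + eps%:E)%E.
  move=> eps e0; have [M3 hM3] := h3 eps e0.
  set K := (Num.Def.archi_bound (Num.max 0 M3)).+1.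
  have hK : Num.max 0 M3 < K%:R.
    apply: lt_le_trans (archi_boundP _) _; first by rewrite le_max lexx.
    by rewrite ler_nat.
  have hK3 : M3 < K%:R by apply: le_lt_trans hK; rewrite !le_max lexx !orbT.
  exists K; split => // n x.
  set B := [set w | (eta n w <= x)%R].
  set A := [set w | (x - K%:R < eta n w <= x - K%:R + K%:R)%R].
  have mA : measurable A by exact: (mset n (fun r => x - K%:R < r <= x - K%:R + K%:R)).
  have mB : measurable B by exact: (mset n (fun r => r <= x)).
  have le : (\int[P]_w (\1_B w)%:E <=
             \int[P]_w ((ph n w x + 1 * \1_A w + eps)%:E))%E.
    apply: ge0_le_integral => //.
    - by apply: mEFin; exact: measurable_indic.
    - apply: mEFin; apply: measurable_funD; last exact: measurable_cst.
      apply: measurable_funD => //; apply: measurable_funM; first exact: measurable_cst.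
      exact: measurable_indic.
    move=> w _; rewrite lee_fin.
    have := ph0 n w x; have /andP[iA0 iA1] := i01 A w.
    have [Bw|nBw] := pselect (B w); last first.
      by rewrite [\1_B w]indicE memNset //=; lra.
    rewrite [\1_B w]indicE (mem_set Bw) /=.
    have [Aw|nAw] := pselect (A w).
      by rewrite [\1_A w]indicE (mem_set Aw) /=; lra.
    have he : eta n w <= x - K%:R.
      rewrite leNgt; apply/negP => he; apply: nAw; rewrite /A /= he /= subrK.
      exact: Bw.
    have := hM3 n w x ltac:(lra); lra.
  rewrite integral_indic // setIT in le.
  rewrite (int_lin _ _ _ P _ _ _ _ (hmp n x) (fun w => ph0 n w x) mA ler01 (ltW e0)) in le.
  rewrite (FE n x).1 (Pfin _ _ _ P _ mA).1 in le.
  have {}le : ((fine (P B))%:E <= (F n x)%:E + 1 * (fine (P A))%:E + eps%:E)%E.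
    by rewrite -(Pfin _ _ _ P _ mB).1; exact: le.
  rewrite (Pfin _ _ _ P _ mB).1.
  have hw := window_sum _ _ _ P (eta n) (hme n) K (x - K%:R).
  rewrite (Pfin _ _ _ P _ mA).1 in hw.
  rewrite -EFinM -!EFinD lee_fin in le.
  apply: (@le_trans _ _ ((fine (P A))%:E + eps%:E)%E).
    rewrite -EFinB -EFinD lee_fin; lra.
  by apply: leeD.
have G0 : forall n, (0 <= ereal_sup [set (F n (x + 1) - F n x)%:E | x in [set: R]])%E.
  move=> n; apply: le_trans (sup_ub _ _ 0); rewrite lee_fin subr_ge0; apply: Fmono; lra.
have H0 : forall n, (0 <= ereal_sup [set (P [set w | (eta n w <= x)%R] - (F n x)%:E)%E
                                    | x in [set: R]])%E.
  move=> n; apply: le_trans (sup_ub _ _ 0).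
  have -> : [set w | (eta n w <= 0)%R] = setT by apply/seteqP; split => w //= _.
  rewrite probability_setT -EFinB lee_fin subr_ge0; by case/andP: (FE n 0).2.
rewrite /asymp_equiv /spreads_rv /spreads_fun; split.
  split => hs.
  - apply: (@cvg0_bound R _ _ G0 S0 hs) => e e0.
    have [k [k0 hk]] := KB e e0; exists k%:R; split; first by rewrite ltr0n.
    by move=> n; apply: ge_ereal_sup => _ [x _ <-]; exact: hk.
  - apply: (@cvg0_bound R _ _ S0 G0 hs) => e e0.
    exists c^-1; split; first by rewrite invr_gt0.
    move=> n; apply: ge_ereal_sup => _ [x _ <-].
    have mW : measurable [set w | (x < eta n w <= x + 1)%R].
      exact: (mset n (fun r => x < r <= x + 1)).
    have := KA n x; rewrite (Pfin _ _ _ P _ mW).1 -EFinM lee_fin => hc.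
    apply: (@le_trans _ _ (c^-1%:E * (F n (x + 1) - F n x)%:E)%E).
      by rewrite -EFinM lee_fin ler_pdivlMl.
    apply: (@le_trans _ _ (c^-1%:E * ereal_sup [set (F n (x + 1) - F n x)%:E | x in [set: R]])%E).
      apply: lee_wpmul2l; first by rewrite lee_fin invr_ge0 ltW.
      exact: (sup_ub _ (fun x => (F n (x + 1) - F n x)%:E) x).
    by apply: leeDl; rewrite lee_fin ltW.
move=> hs _; apply: (@cvg0_bound R _ _ H0 S0 hs) => e e0.
have [k [k0 hk]] := KC e e0; exists k%:R; split; first by rewrite ltr0n.
by move=> n; apply: ge_ereal_sup => _ [x _ <-]; exact: hk.
Qed.

Lemma meas_J d (T : measurableType d) (J : T -> pred nat) j :
  (forall j, measurable [set w | J w j]) -> measurable_fun setT (fun w => J w j).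
Proof.
move=> mJ; apply: (measurable_fun_bool true); rewrite setTI.
have -> : (fun w => J w j) @^-1` [set true] = [set w | J w j] by apply/seteqP; split => w /=.
exact: mJ.
Qed.

Lemma meas_minJ d (T : measurableType d) (J : T -> pred nat) :
  (forall j, measurable [set w | J w j]) -> (forall w, exists j, J w j) ->
  forall k, measurable [set w | minJ (J w) = k].
Proof.
move=> mJ exJ k.
have -> : [set w | minJ (J w) = k] = [set w | J w k] `&`
    \bigcap_i (if (i < k)%N then ~` [set w | J w i] else setT).
  apply/seteqP; split => w /=.
    move=> hk; have [Jm hm] := minJ_spec _ (exJ w); rewrite hk in Jm hm.
    split => // i _; case: ifP => // ik /= Ji; have := hm _ Ji; lia.
  move=> [Jk hi]; have [Jm hm] := minJ_spec _ (exJ w).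
  apply/eqP; rewrite eqn_leq hm //=; rewrite leqNgt; apply/negP => mk.
  by have := hi (minJ (J w)) I; rewrite mk /=; apply.
apply: measurableI; first exact: mJ.
apply: bigcapT_measurable => i; case: ifP => _; last exact: measurableT.
exact/measurableC/mJ.
Qed.

Lemma meas_eta d (T : measurableType d) (R : realType) (J : T -> pred nat) :
  (forall j, measurable [set w | J w j]) -> (forall w, exists j, J w j) ->
  forall Q : set R, measurable [set w | Q (- ((minJ (J w))%:R : R))].
Proof.
move=> mJ exJ Q.
have -> : [set w | Q (- ((minJ (J w))%:R : R))] =
  \bigcup_k ([set w | minJ (J w) = k] `&` [set _ | Q (- (k%:R : R))]).
  apply/seteqP; split => w /=; first by move=> h; exists (minJ (J w)).
  by move=> [k _ [/= <-]].
apply: bigcupT_measurable => k; apply: measurableI; first exact: meas_minJ.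
have [h|h] := pselect (Q (- (k%:R : R))).
  by rewrite (_ : [set _ | _] = setT); [exact: measurableT|apply/seteqP; split].
by rewrite (_ : [set _ | _] = set0); [exact: measurable0|apply/seteqP; split].
Qed.

Lemma meas_ph d (T : measurableType d) (R : realType) (q : R) (J : T -> pred nat) x :
  (forall j, measurable [set w | J w j]) ->
  measurable_fun setT (fun w => phi q (J w) x).
Proof.
move=> mJ; apply: (measurable_fun_cvg (h := fun N w => pp q (J w) x N)).
  move=> N; rewrite /pp.
  under eq_fun do rewrite big_mkcond.
  apply: measurable_prod => j _; apply: measurable_fun_ifT.
  - exact: meas_J.
  - exact: measurable_cst.
  - exact: measurable_cst.
by move=> w _; exact: pp_cvg.
Qed.

Theorem corollary5p7 (d : measure_display) (T : measurableType d)
  (R : realType) (P : probability T R) (q : R)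
  (J : nat -> T -> pred nat) :
  0 < q < 1 ->
  (forall n (j : nat), measurable [set w | J n w j]) ->
  (forall n w, exists j : nat, J n w j) ->
  let eta := fun n w => - ((minJ (J n w))%:R : R) in
  let ph := fun n w x => phi q (J n w) x in
  (* (1) *)
  (forall n w (x y : R), x <= y -> 0 <= ph n w x /\ ph n w x <= ph n w y /\ ph n w y <= 1) /\
  (* (2) *)
  (forall eps : R, 0 < eps -> exists M : R, forall n w x,
      eta n w - x > M -> ph n w x < eps) /\
  (* (3) *)
  (forall eps : R, 0 < eps -> exists M : R, forall n w x,
      eta n w - x < - M -> ph n w x > 1 - eps) /\
  (* (4) *)
  (exists c : R, 0 < c /\ forall n w x,
      x < eta n w <= x + 1 -> ph n w (x + 1) - ph n w x >= c) /\
  (* conclusion *)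
  asymp_equiv P eta (fun n x => fine (\int[P]_w (ph n w x)%:E)).
Proof.
move=> hq mJ exJ eta ph.
have H1 : forall n w (x y : R), x <= y ->
    0 <= ph n w x /\ ph n w x <= ph n w y /\ ph n w y <= 1.
  move=> n w x y xy; rewrite /ph; split; first exact: phi_ge0.
  by split; [exact: phi_mono|exact: phi_le1].
have H2 : forall eps : R, 0 < eps -> exists M : R, forall n w x,
      eta n w - x > M -> ph n w x < eps.
  move=> eps e0; have [M hM] := @phi_small R q hq eps e0.
  by exists M => n w x; exact: hM (exJ n w).
have H3 : forall eps : R, 0 < eps -> exists M : R, forall n w x,
      eta n w - x < - M -> ph n w x > 1 - eps.
  move=> eps e0; have [M hM] := @phi_big R q hq eps e0.
  by exists M => n w x; exact: hM (exJ n w).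
have H4 : exists c : R, 0 < c /\ forall n w x,
      x < eta n w <= x + 1 -> ph n w (x + 1) - ph n w x >= c.
  have [c [c0 hc]] := @phi_gap R q hq.
  by exists c; split => // n w x; exact: hc (exJ n w).
split; first exact: H1.
split; first exact: H2.
split; first exact: H3.
split; first exact: H4.
apply: main_abs => //.
- by move=> n Q; exact: (meas_eta _ _ R (J n) (mJ n) (exJ n) Q).
- by move=> n x; exact: (meas_ph _ _ R q (J n) x (mJ n)).
- by move=> n w; rewrite /eta oppr_le0 ler0n.
Qed.
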